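(* Let $\Delta$ be a finite simplicial complex of dimension $d$ with a gradient vector field $\mathcal{V}$, let $k\in\{1,\dots,d\}$, let $(\sigma_0,\tau_0)$ be a cancellable critical pair ($\dim\sigma_0=k$, $\dim\tau_0=k-1$), and let $\mathcal{W}$ be obtained from $\mathcal{V}$ by cancelling it. Let $\delta_q^{\mathcal{V}}:C_{q-1}^{\mathcal{V}}(\Delta)\to C_q^{\mathcal{V}}(\Delta)$ and $\delta_q^{\mathcal{W}}:C_{q-1}^{\mathcal{W}}(\Delta)\to C_q^{\mathcal{W}}(\Delta)$ be the $q$-th coboundary maps of the co-Morse complexes of $\mathcal{V}$ and $\mathcal{W}$. Let $\sigma_0,\dots,\sigma_n$ be the $\mathcal{V}$-critical $k$-simplices and $\tau_0,\dots,\tau_m$ the $\mathcal{V}$-critical $(k-1)$-simplices. Then: (1) For $q>k+1$ or $q<k-1$, $\delta_q^{\mathcal{W}}=\delta_q^{\mathcal{V}}$. (2) For every $\mathcal{W}$-critical $(k-2)$-simplex $\beta$, if $\delta_{k-1}^{\mathcal{V}}(\beta)=\sum_{i=0}^m b_i\tau_i$, then $\delta_{k-1}^{\mathcal{W}}(\beta)=\sum_{i=1}^m b_i\tau_i$. (3) $\delta_{k+1}^{\mathcal{W}}$ is the restriction of $\delta_{k+1}^{\mathcal{V}}$ to the subgroup $C_k^{\mathcal{W}}(\Delta)\subseteq C_k^{\mathcal{V}}(\Delta)$. (4) If $\delta_k^{\mathcal{V}}(\tau_i)=\sum_{j=0}^n a_{ji}\sigma_j$ for all $i\in\{0,\dots,m\}$,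 then for all $i\in\{1,\dots,m\}$, \[\delta_k^{\mathcal{W}}(\tau_i)=\sum_{j=1}^n\bigl(a_{ji}-a_{00}\,a_{0i}\,a_{j0}\bigr)\sigma_j.\]
   Context: A (finite abstract) simplicial complex $\Delta$: finite family of finite sets closed under subsets; $q$-simplex = member with $q+1$ elements. Fix a total order on vertices, orient simplices increasingly. Incidence number: for a $q$-simplex $\sigma$ and $(q-1)$-simplex $\tau$, $\langle\sigma,\tau\rangle=(-1)^p$ if $\tau$ is $\sigma$ with its $p$-th vertex deleted (counting from $0$), $0$ if $\tau\not\subseteq\sigma$. A discrete vector field is a set of pairs $(\alpha,\beta)$, $\alpha\subsetneq\beta$, $\dim\beta=\dim\alpha+1$, each simplex in at most one pair. A $\mathcal{V}$-trajectory from a $q$-simplex $\beta_0$ to a $(q-1)$-simplex $\alpha_{r+1}$ is a sequence $\beta_0,\alpha_1,\beta_1,\dots,\alpha_r,\beta_r,\alpha_{r+1}$, $r\ge0$, with $(\alpha_i,\beta_i)\in\mathcal{V}$, $\alpha_1\subsetneq\beta_0$, $\alpha_{i+1}\subsetneq\beta_i$, $\alpha_{i+1}\ne\alpha_i$; its weight is $\prod_{i=1}^r(-\langle\beta_{i-1},\alpha_i\rangle\langle\beta_i,\alpha_i\rangle)\cdot\langle\beta_r,\alpha_{r+1}\rangle$ (similarly for trajectories ending at a $q$-simplex $\beta_r$, without the last factor). A co-$\mathcal{V}$-trajectory from a $(q-1)$-simplex $\tau$ to a $q$-simplex $\sigma$ is the reverse of a $\mathcal{V}$-trajectory from $\sigma$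 to $\tau$, with the same weight. A gradient vector field admits no trajectory with $r>0$ and $\beta_r=\beta_0$. A nonempty simplex is critical if in no pair (or a $0$-simplex paired with $\emptyset$). $C_q^{\mathcal{V}}(\Delta)$ is the free abelian group on $\mathcal{V}$-critical $q$-simplices. The Morse boundary $\partial_q^{\mathcal{V}}(\beta)=\sum_\alpha(\sum_P w(P))\alpha$, sum over $\mathcal{V}$-critical $(q-1)$-simplices $\alpha$ and $\mathcal{V}$-trajectories $P$ from $\beta$ to $\alpha$. The co-Morse coboundary $\delta_q^{\mathcal{V}}(\tau)=\sum_\sigma(\sum_Q w(Q))\sigma$ for a $\mathcal{V}$-critical $(q-1)$-simplex $\tau$, sum over $\mathcal{V}$-critical $q$-simplices $\sigma$ and co-$\mathcal{V}$-trajectories $Q$ from $\tau$ to $\sigma$; thus the coefficient of $\sigma$ in $\delta_q^{\mathcal{V}}(\tau)$ equals the coefficient of $\tau$ in $\partial_q^{\mathcal{V}}(\sigma)$. Cancellation: if $\sigma_0$ ($k$-simplex) and $\tau_0$ ($(k-1)$-simplex) are $\mathcal{V}$-critical with a unique $\mathcal{V}$-trajectory $P_0:\sigma_0=\beta_0,\alpha_1,\beta_1,\dots,\alpha_r,\beta_r,\alpha_{r+1}=\tau_0$ between them, $(\sigma_0,\tau_0)$ is a cancellable critical pair and $\mathcal{W}=(\mathcal{V}\setminus\{(\alpha_i,\beta_i):1\le i\le r\})\cup\{(\alpha_{i+1},\beta_i):0\le i\le r\}$; $\mathcal{W}$ is a gradient vector field whose critical simplices are the $\mathcal{V}$-critical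 ones except $\sigma_0,\tau_0$. *)

(* Defs.v *)
(* Abstract simplicial complexes on the vertex set 'I_N,
   ordered by the natural order of 'I_N; simplices are finite sets of
   vertices, a q-simplex has q+1 elements. *)
From mathcomp Require Import all_boot all_order all_algebra.
Set Implicit Arguments. Unset Strict Implicit. Unset Printing Implicit Defensive.
Import GRing.Theory Num.Theory.
Local Open Scope ring_scope.

Notation simplex N := {set 'I_N}.
Notation vpair N := (simplex N * simplex N)%type.

Definition is_complex N (D : {set simplex N}) : Prop :=
  forall s t : simplex N, s \in D -> t \subset s -> t \in D.

Definition complex_dim N (D : {set simplex N}) (d : nat) : Prop :=
  (exists2 s, s \in D & #|s| = d.+1) /\ (forall s, s \in D -> (#|s| <= d.+1)%N).

Definition incidence N (s t : simplex N) : int :=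
  if (t \subset s) && (#|s| == #|t|.+1)%N then
    match [pick x in s :\: t] with
    | Some v => (-1) ^+ #|[set x in s | (val x < val v)%N]|
    | None => 0
    end
  else 0.

Definition is_dvf N (D : {set simplex N}) (V : {set vpair N}) : Prop :=
  (forall p, p \in V ->
     [/\ p.1 \in D, p.2 \in D, p.1 \proper p.2 & #|p.2| = (#|p.1|).+1]) /\
  (forall p p' x, p \in V -> p' \in V ->
     (x == p.1) || (x == p.2) -> (x == p'.1) || (x == p'.2) -> p = p').

(* [vpath V n b pa s] : s = [:: (a_1,b_1); ...; (a_r,b_r)] is such that
   b, a_1, b_1, ..., a_r, b_r satisfies the V-trajectory conditions, with
   the b's having n elements (dimension n-1), the a's n-1 elements,
   and pa the previous a (None for the starting simplex). *)
Fixpoint vpath N (V : {set vpair N}) (n : nat) (b : simplex N)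
    (pa : option (simplex N)) (s : seq (vpair N)) : bool :=
  match s with
  | [::] => true
  | (a, b') :: s' =>
      [&& (a, b') \in V, #|a| == n.-1, #|b'| == n, a \proper b,
          pa != Some a & vpath V n b' (Some a) s']
  end.

(* V-trajectory b0, a_1, b_1, ..., a_r, b_r, ae from the simplex b0 with n
   elements to the simplex ae with n-1 elements; s = [:: (a_i, b_i)] *)
Definition is_traj N (V : {set vpair N}) (n : nat) (b0 : simplex N)
    (s : seq (vpair N)) (ae : simplex N) : bool :=
  [&& #|b0| == n, vpath V n b0 None s, #|ae| == n.-1,
      ae \proper last b0 [seq p.2 | p <- s] &
      last None [seq Some p.1 | p <- s] != Some ae].

Fixpoint traj_weight N (b : simplex N) (s : seq (vpair N)) (ae : simplex N)
    : int :=
  match s with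
  | [::] => incidence b ae
  | (a, b') :: s' => - (incidence b a * incidence b' a) * traj_weight b' s' ae
  end.

(* gradient vector field: no closed trajectory b0, a1, b1, ..., a_r, b_r = b0
   with r > 0 (and b1 <> b0) *)
Definition gradient N (D : {set simplex N}) (V : {set vpair N}) : Prop :=
  is_dvf D V /\
  forall n (b0 : simplex N) (s : seq (vpair N)), #|b0| = n -> vpath V n b0 None s -> s != [::] ->
    last b0 [seq p.2 | p <- s] = b0 -> head b0 [seq p.2 | p <- s] = b0.

(* critical simplex with n elements (dimension n-1) *)
Definition crit N (D : {set simplex N}) (V : {set vpair N}) (n : nat)
    (s : simplex N) : bool :=
  [&& s \in D, #|s| == n, s != set0 &
      [forall p in V, (p.1 != s) && (p.2 != s)] || ((set0, s) \in V)].

(* coefficient of t in the Morse boundary of s (s with n elements, t with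
   n-1 elements) = sum of the weights of all V-trajectories from s to t.
   Trajectories are enumerated up to length #|V|. *)
Definition mcoef N (V : {set vpair N}) (n : nat) (s t : simplex N) : int :=
  \sum_(r < (#|V|).+1)
     \sum_(u : (nat_of_ord r).-tuple (vpair N) | is_traj V n s u t)
        traj_weight s u t.

(* chains: integer functions on simplices; C_{n-1}^V = functions supported on
   critical simplices with n elements *)
Definition chain N := {ffun simplex N -> int}.

Definition inC N (D : {set simplex N}) (V : {set vpair N}) (n : nat)
    (c : chain N) : Prop :=
  forall s, c s != 0 -> crit D V n s.

Definition basis_chain N (t : simplex N) : chain N :=
  [ffun x => if x == t then 1 else 0].

(* q-th co-Morse coboundary delta_q : C_{q-1} -> C_q ((q-1)-simplices have
   q elements, q-simplices have q+1 elements); coefficient of s in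
   delta_q(t) = coefficient of t in the Morse boundary of s *)
Definition cobd N (D : {set simplex N}) (V : {set vpair N}) (q : nat)
    (c : chain N) : chain N :=
  [ffun s => if crit D V q.+1 s then
               \sum_(t | crit D V q t) c t * mcoef V q.+1 s t
             else 0].

Definition cancelW N (V : {set vpair N}) (b0 : simplex N)
    (s : seq (vpair N)) (ae : simplex N) : {set vpair N} :=
  (V :\: [set p in s]) :|:
  [set p in zip ([seq p.1 | p <- s] ++ [:: ae]) (b0 :: [seq p.2 | p <- s])].

(* Main.v *)
Require Import Defs.
From mathcomp Require Import all_boot all_order all_algebra.
From mathcomp Require Import ring lra zify.
From Stdlib Require Import Classical ClassicalEpsilon.
Import GRing.Theory Num.Theory.
Set Implicit Arguments. Unset Strict Implicit. Unset Printing Implicit Defensive.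
Local Open Scope ring_scope.


Section Generic.
Variable N : nat.
Implicit Types (t b c x : simplex N) (s : seq (vpair N)) (M : {set vpair N}) (p q : vpair N).

Lemma inc_neq0 (s t : simplex N) : incidence s t != 0 -> t \proper s /\ #|s| = (#|t|).+1.
Proof.
rewrite /incidence; case: ifP => [/andP[sub /eqP sz] _|]; last by rewrite eqxx.
split=> //; rewrite properEcard sub sz; lia.
Qed.

Lemma inc_neq0' (s t : simplex N) : t \subset s -> #|s| = (#|t|).+1 -> incidence s t != 0.
Proof.
move=> sub sz; rewrite /incidence sub sz eqxx /=.
case: pickP => [v _|H]; first by rewrite signr_eq0.
have : s \subset t.
  by apply/subsetP=> x xs; move: (H x); rewrite !inE xs andbT => /negbFE.
move/subset_leq_card; lia.
Qed.

Lemma inc_sq (s t : simplex N) : incidence s t != 0 -> incidence s t * incidence s t = 1.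
Proof.
rewrite /incidence; case: ifP => _; last by rewrite eqxx.
case: pickP => [v _|]; last by rewrite eqxx.
by rewrite -expr2 sqrr_sign.
Qed.

Definition step M b p : bool := [&& p \in M, incidence b p.1 != 0 & (p.1, b) \notin M].
Definition endstep M b t : bool := (incidence b t != 0) && ((t, b) \notin M).
Fixpoint walk M b (s : seq (vpair N)) : bool :=
  if s is p :: s' then step M b p && walk M p.2 s' else true.
Definition lastb b (s : seq (vpair N)) := last b [seq p.2 | p <- s].

Lemma walk_cat M b s1 s2 : walk M b (s1 ++ s2) = walk M b s1 && walk M (lastb b s1) s2.
Proof. by elim: s1 b => //= p s1 IH b; rewrite IH andbA. Qed.

Lemma lastb_cat b s1 s2 : lastb b (s1 ++ s2) = lastb (lastb b s1) s2.
Proof. by rewrite /lastb map_cat last_cat. Qed.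

Definition shapeM M := forall p, p \in M -> p.1 \proper p.2 /\ #|p.2| = (#|p.1|).+1.
Definition uuM M := forall p q, p \in M -> q \in M -> p.2 = q.2 -> p = q.
Definition luM M := forall p q, p \in M -> q \in M -> p.1 = q.1 -> p = q.

Lemma step_size M b p : shapeM M -> step M b p -> #|p.2| = #|b|.
Proof.
move=> sh /and3P[pM /inc_neq0 [_ e] _]; have [_ ->] := sh p pM; by rewrite e.
Qed.

Lemma walk_size_lvl M b s : shapeM M -> walk M b s -> #|lastb b s| = #|b|.
Proof.
move=> sh; elim: s b => //= p s IH b /andP[st w].
by rewrite /lastb /= -(step_size sh st); apply: IH.
Qed.

Definition pb (P : Prop) : bool := if excluded_middle_informative P then true else false.
Lemma pbP (P : Prop) : reflect P (pb P).
Proof. by rewrite /pb; case: excluded_middle_informative => h; constructor. Qed.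

Definition reach M b :=
  [set c | pb (exists s, [/\ s != [::], walk M b s & lastb b s = c])].
Definition hpot M b := #|reach M b|.
Definition acyclic M := forall b s, s != [::] -> walk M b s -> lastb b s != b.
Definition uppers M := [set p.2 | p in M].

Lemma lastb_upper M b s : s != [::] -> walk M b s -> lastb b s \in uppers M.
Proof.
elim: s b => // p [|p' s] IH b _ /= /andP[/and3P[pM _ _] w].
  by rewrite /lastb /=; apply/imsetP; exists p.
by apply: (IH p.2).
Qed.

Lemma reach_sub M b : reach M b \subset uppers M.
Proof.
apply/subsetP=> c; rewrite inE => /pbP [s [ne w <-]]; exact: lastb_upper.
Qed.

Lemma hpot_le M b : (hpot M b <= #|M|)%N.
Proof.
apply: leq_trans (subset_leq_card (reach_sub M b)) _; exact: leq_imset_card.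
Qed.

Lemma hpot_step M b p : acyclic M -> step M b p -> (hpot M p.2 < hpot M b)%N.
Proof.
move=> ac st; apply: proper_card; apply/properP; split.
  apply/subsetP=> c; rewrite !inE => /pbP [s [ne w e]]; apply/pbP.
  exists (p :: s); split=> //=; first by rewrite st.
exists p.2; first by rewrite inE; apply/pbP; exists [:: p]; rewrite /= st.
rewrite inE; apply/negP=> /pbP [s [ne w e]]; by move: (ac _ _ ne w); rewrite e eqxx.
Qed.

Lemma walk_len M b s : acyclic M -> walk M b s -> (size s <= hpot M b)%N.
Proof.
move=> ac; elim: s b => //= p s IH b /andP[st w].
by apply: leq_ltn_trans (IH _ w) (hpot_step ac st).
Qed.

Lemma hpot_upper M b : acyclic M -> b \in uppers M -> (hpot M b < #|M|)%N.
Proof.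
move=> ac bU; apply: leq_trans (leq_imset_card (fun p : vpair N => p.2) M).
apply: proper_card; apply/properP; split; first exact: reach_sub.
exists b => //; rewrite inE; apply/negP=> /pbP [s [ne w e]].
by move: (ac _ _ ne w); rewrite e eqxx.
Qed.

End Generic.


Lemma sum_tuple_cons (T : finType) r (F : seq T -> int) (P : seq T -> bool) :
  \sum_(u : r.+1.-tuple T | P u) F u =
  \sum_(x : T) \sum_(u : r.-tuple T | P (x :: u)) F (x :: u).
Proof.
rewrite pair_big_dep /=.
rewrite (reindex (fun pu : T * r.-tuple T => [tuple of pu.1 :: pu.2])) /=.
  by apply: eq_bigl => -[x u].
exists (fun u : r.+1.-tuple T => (thead u, [tuple of behead u])) => [[x u]|u] _ /=.
  by congr (_, _); apply: val_inj.
by rewrite [in RHS](tuple_eta u).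
Qed.

Lemma sum_tuple0 (T : finType) (F : seq T -> int) (P : seq T -> bool) :
  \sum_(u : 0.-tuple T | P u) F u = if P [::] then F [::] else 0.
Proof.
rewrite big_mkcond /= (eq_bigr (fun _ => if P [::] then F [::] else 0)).
  by rewrite sumr_const card_tuple expn0.
by move=> u _; rewrite (tuple0 u).
Qed.

Section Z.
Variable N : nat.
Implicit Types (t b c x : simplex N) (s : seq (vpair N)) (M : {set vpair N}) (p q : vpair N).

Definition Zr M (r : nat) b t : int :=
  \sum_(u : r.-tuple (vpair N) | walk M b u && endstep M (lastb b u) t) traj_weight b u t.
Definition Bp M b x : int := if (x, b) \in M then 0 else incidence b x.

Lemma Zr0 M b t : Zr M 0 b t = Bp M b t.
Proof.
rewrite /Zr (sum_tuple0 (fun u => traj_weight b u t) (fun u => walk M b u && endstep M (lastb b u) t)) /= /lastb /= /endstep /Bp.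
case: ((t, b) \in M); rewrite ?andbF ?andbT //.
by case: eqP.
Qed.

Lemma ZrS M r b t : Zr M r.+1 b t =
  \sum_p (if step M b p then - (incidence b p.1 * incidence p.2 p.1) * Zr M r p.2 t else 0).
Proof.
rewrite /Zr (@sum_tuple_cons _ r (fun u => traj_weight b u t) (fun u => walk M b u && endstep M (lastb b u) t)); apply: eq_bigr => -[a b'] _ /=.
case: (step M b (a, b')) => /=; last by rewrite big_pred0.
by rewrite big_distrr.
Qed.

Lemma Zr_nil M r b t : acyclic M -> (hpot M b < r)%N -> Zr M r b t = 0.
Proof.
move=> ac lt; rewrite /Zr big_pred0 // => u; apply/negbTE/negP=> /andP[w _].
by have := walk_len ac w; rewrite size_tuple; lia.
Qed.

Definition Zs M b t := \sum_(r < (#|M|).+1) Zr M r b t.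

Definition psi M t x : int :=
  (if x == t then 1 else 0) + \sum_(p in M | p.1 == x) (- incidence p.2 x) * Zs M p.2 t.

Lemma Zs_key M b t : acyclic M -> Zs M b t = \sum_x Bp M b x * psi M t x.
Proof.
move=> ac; rewrite /Zs big_ord_recl Zr0.
have -> : \sum_(i < #|M|) Zr M (bump 0 i) b t =
   \sum_p (if step M b p then - (incidence b p.1 * incidence p.2 p.1) * Zs M p.2 t else 0).
  under eq_bigr do rewrite /bump /= add1n ZrS.
  rewrite exchange_big /=; apply: eq_bigr => p _.
  case: ifP => st; last by rewrite big1.
  rewrite -big_distrr /= /Zs big_ord_recr /= Zr_nil ?addr0 //.
  apply: hpot_upper => //; apply/imsetP; exists p => //; by case/and3P: st.
rewrite /psi.
under [RHS]eq_bigr do rewrite mulrDr.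
rewrite big_split /=; congr (_ + _).
  rewrite (bigD1 t) //= eqxx mulr1 big1 ?addr0 // => x /negbTE ->; by rewrite mulr0.
under [RHS]eq_bigr do rewrite big_distrr /=.
rewrite (exchange_big_dep (fun p : vpair N => p \in M)) /=; last by move=> x p _ /andP[].
rewrite [RHS]big_mkcond /=; apply: eq_bigr => p _.
rewrite /step /Bp; case pM: (p \in M) => /=; last by [].
rewrite (big_pred1 p.1); last by move=> x; rewrite eq_sym.
case: ((p.1, b) \in M); rewrite ?andbF ?mul0r //=.
case: eqP => [->|_] /=; first by rewrite !mul0r.
ring.
Qed.


Lemma Zs_crit M (s : simplex N) t : acyclic M -> (forall x, (x, s) \notin M) ->
  Zs M s t = \sum_x incidence s x * psi M t x.
Proof.
move=> ac ns; rewrite Zs_key //; apply: eq_bigr => x _; by rewrite /Bp (negbTE (ns x)).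
Qed.

Lemma shape_inc M p : shapeM M -> p \in M -> incidence p.2 p.1 != 0.
Proof. by move=> sh /sh [/proper_sub pr e]; apply: inc_neq0'. Qed.

Lemma psi_upper M p0 t : acyclic M -> shapeM M -> uuM M -> luM M -> p0 \in M -> p0.1 != t ->
  \sum_x incidence p0.2 x * psi M t x = 0.
Proof.
move=> ac sh uu lu p0M ne.
have eB : forall x, incidence p0.2 x = Bp M p0.2 x + (if x == p0.1 then incidence p0.2 p0.1 else 0).
  move=> x; rewrite /Bp; case: eqP => [->|nx].
    by rewrite -surjective_pairing p0M add0r.
  case: ifP => [xM|_]; last by rewrite addr0.
  by case: nx; rewrite -(uu _ _ xM p0M erefl).
under eq_bigr do rewrite eB mulrDl.
rewrite big_split /= -Zs_key // (bigD1 p0.1) //= eqxx big1 ?addr0; last first.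
  by move=> x /negbTE ->; rewrite mul0r.
have -> : psi M t p0.1 = - incidence p0.2 p0.1 * Zs M p0.2 t.
  rewrite /psi (negbTE ne) add0r (big_pred1 p0) //.
  move=> p; apply/andP/eqP => [[pM /eqP e]|->]; first exact: lu.
  by rewrite p0M eqxx.
rewrite mulrA mulrN (inc_sq (shape_inc sh p0M)); ring.
Qed.

Definition lowers M := [set p.1 | p in M].

Lemma phi_zero M (phi : simplex N -> int) : acyclic M -> shapeM M -> uuM M ->
  (forall x, x \notin lowers M -> phi x = 0) ->
  (forall p, p \in M -> \sum_x incidence p.2 x * phi x = 0) ->
  forall x, phi x = 0.
Proof.
move=> ac sh uu h0 heq.
suff H : forall m p, p \in M -> (hpot M p.2 < m)%N -> phi p.1 = 0.
  move=> x; case: (boolP (x \in lowers M)) => [/imsetP [p pM ->]|]; last exact: h0.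
  exact: (H (hpot M p.2).+1).
elim=> // m IH p pM lt.
have := heq p pM; rewrite (bigD1 p.1) //= big1 ?addr0.
  by move/eqP; rewrite mulf_eq0 (negbTE (shape_inc sh pM)) /= => /eqP.
move=> y; case: (boolP (y \in lowers M)) => [/imsetP [q qM ->]|]; last by move/h0 => -> _; rewrite mulr0.
move=> ny.
case: (eqVneq (incidence p.2 q.1) 0) => [->|nz]; first by rewrite mul0r.
rewrite (IH q) ?mulr0 //.
have st : step M p.2 q.
  rewrite /step qM nz /=; apply/negP=> qpM.
  by move: ny; rewrite -(uu _ _ qpM pM erefl) /= eqxx.
have := hpot_step ac st; lia.
Qed.
End Z.


Section Bridge.
Variable N : nat.
Implicit Types (t b c x : simplex N) (s : seq (vpair N)) (M : {set vpair N}) (p q : vpair N).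

Lemma inc_lvl n c t : #|c| = n -> (incidence c t != 0) = (#|t| == n.-1)%N && (t \proper c).
Proof.
move=> cn; apply/idP/andP => [/inc_neq0 [pr e]|[/eqP tn pr]]; first by split=> //; rewrite -cn e.
apply: inc_neq0'; first exact: proper_sub.
have := proper_card pr; rewrite cn tn; case: n {cn tn} => //.
Qed.

Definition pa_ok M b (pa : option (simplex N)) := forall x, ((x, b) \in M) = (pa == Some x).

Lemma vpath_walk M n b pa u : shapeM M -> uuM M -> #|b| = n -> pa_ok M b pa ->
  vpath M n b pa u = walk M b u.
Proof.
move=> sh uu; elim: u b pa => //= -[a b'] u IH b pa bn ok /=.
rewrite /step /=; case abM: ((a, b') \in M) => //=.
have [pr e] := sh _ abM; rewrite /= in pr e.
rewrite (inc_lvl a bn) -ok.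
case: (boolP (#|a| == n.-1)%N) => //= /eqP an.
case: (boolP (a \proper b)) => [prb|]; last by rewrite !andbF.
have n0 : (0 < n)%N by rewrite -bn; apply: leq_ltn_trans (proper_card prb).
have b'n : #|b'| = n by rewrite e an prednK.
rewrite b'n eqxx /=; case: ((a, b) \in M) => //=.
apply: IH => // x; apply/idP/idP => [xM|/eqP [<-] //].
by have := uu _ _ xM abM erefl => -[->].
Qed.

Lemma walk_state M n b pa u : shapeM M -> uuM M -> #|b| = n -> pa_ok M b pa -> walk M b u ->
  pa_ok M (lastb b u) (last pa [seq Some p.1 | p <- u]) /\ #|lastb b u| = n.
Proof.
move=> sh uu; elim: u b pa => //= -[a b'] u IH b pa bn ok /andP[st w].
apply: (IH b' (Some a)) => //.
  by rewrite (step_size sh st).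
move=> x; apply/idP/idP => [xM|/eqP [<-]]; last by case/and3P: st.
by case/and3P: st => abM _ _; have := uu _ _ xM abM erefl => -[->].
Qed.

Lemma is_traj_walk M n (s : simplex N) u t : shapeM M -> uuM M -> #|s| = n ->
  (forall x, (x, s) \notin M) ->
  is_traj M n s u t = walk M s u && endstep M (lastb s u) t.
Proof.
move=> sh uu sn ns.
have ok : pa_ok M s None by move=> x; rewrite (negbTE (ns x)).
rewrite /is_traj sn eqxx /= (vpath_walk u sh uu sn ok).
case: (boolP (walk M s u)) => //= w.
have [ok' cn] := walk_state sh uu sn ok w.
rewrite /endstep (inc_lvl t cn) ok' -andbA; congr [&& _, _ & _]; by rewrite /lastb.
Qed.

Lemma mcoef_Zs M n (s : simplex N) t : shapeM M -> uuM M -> #|s| = n ->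
  (forall x, (x, s) \notin M) -> mcoef M n s t = Zs M s t.
Proof.
move=> sh uu sn ns; rewrite /mcoef /Zs; apply: eq_bigr => r _.
by rewrite /Zr; apply: eq_bigl => u; rewrite is_traj_walk.
Qed.

Lemma walk_vpath M n b pa u : shapeM M -> #|b| = n ->
  (forall x, pa == Some x -> (x, b) \in M) -> walk M b u -> vpath M n b pa u.
Proof.
move=> sh; elim: u b pa => //= -[a b'] u IH b pa bn ok /andP[st w].
have sz := step_size sh st; case/and3P: st => /= abM inz nM.
move: (inz); rewrite (inc_lvl a bn) => /andP[-> ->]; rewrite abM /= sz bn eqxx /=.
apply/andP; split.
  by apply/negP => /ok; rewrite (negbTE nM).
apply: IH => //; first by rewrite sz.
by move=> x /eqP [<-].
Qed.

End Bridge.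


Section SeqFacts.
Variable N : nat.
Implicit Types (t b c x : simplex N) (s : seq (vpair N)) (M : {set vpair N}) (p q : vpair N).

Lemma walk_nth M b s i p0 : walk M b s -> (i < size s)%N ->
  step M (lastb b (take i s)) (nth p0 s i).
Proof.
move=> w lt; move: w; rewrite -{1}(cat_take_drop i s) walk_cat (drop_nth p0 lt) /=.
by case/and3P.
Qed.

Lemma lastb_take_nth b s i p0 : (i < size s)%N -> lastb b (take i.+1 s) = (nth p0 s i).2.
Proof.
elim: s b i => // p s IH b [|i] /= lt; first by rewrite take0.
by rewrite -(IH p.2 i lt).
Qed.

Lemma walk_sub M b s : walk M b s -> {subset s <= M}.
Proof.
elim: s b => //= p s IH b /andP[/and3P[pM _ _] w] q; rewrite inE => /orP[/eqP->//|].
exact: IH w q.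
Qed.

End SeqFacts.

Section Main.
Variables (N d k : nat) (D : {set simplex N}) (V : {set vpair N}) (sigma0 tau0 : simplex N)
  (P : seq (vpair N)).
Hypotheses (cx : is_complex D) (cdim : complex_dim D d) (gr : gradient D V)
  (hk : (1 <= k <= d)%N) (cs : crit D V k.+1 sigma0) (ct : crit D V k tau0)
  (tr : is_traj V k.+1 sigma0 P tau0)
  (un : forall P', is_traj V k.+1 sigma0 P' tau0 -> P' = P).

Implicit Types (t b c x : simplex N) (s : seq (vpair N)) (M : {set vpair N}) (p q : vpair N).

Let dvf := gr.1.

Lemma shapeV : shapeM V.
Proof. by move=> p /(dvf.1 p) [_ _ ? ?]. Qed.
Lemma uuV : uuM V.
Proof. move=> p q pM qM e; apply: (dvf.2 p q p.2) => //; by rewrite ?eqxx ?orbT // e eqxx orbT. Qed.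
Lemma luV : luM V.
Proof. move=> p q pM qM e; apply: (dvf.2 p q p.1) => //; by rewrite ?eqxx // e eqxx. Qed.

Lemma acV : acyclic V.
Proof.
move=> b s ne w; apply/eqP => e.
have vp : vpath V #|b| b None s by apply: walk_vpath shapeV _ _ w.
have := gr.2 #|b| b s erefl vp ne e.
case: s ne w {vp e} => //= p s _ /andP[/and3P[pM _ nM] _] /= e.
by move: nM; rewrite -e -surjective_pairing pM.
Qed.

Lemma k0 : (0 < k)%N. Proof. by case/andP: hk. Qed.

Lemma sz_sigma0 : #|sigma0| = k.+1.
Proof. by case/and4P: cs => _ /eqP. Qed.

Lemma sigma0_free p : p \in V -> (p.1 != sigma0) && (p.2 != sigma0).
Proof.
case/and4P: cs => _ /eqP sz _ /orP[/forallP H pM|sM]; first by have := H p; rewrite pM.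
have [_ e] := shapeV sM; move: e; rewrite /= cards0 sz; have := k0; lia.
Qed.

Lemma sz_tau0 : #|tau0| = k.
Proof. by case/and4P: ct => _ /eqP. Qed.

Lemma tau0_ne0 : tau0 != set0.
Proof. by case/and4P: ct. Qed.

Lemma tau0_notlow p : p \in V -> p.1 != tau0.
Proof.
case/and4P: ct => _ _ ne /orP[/forallP H pM|sM]; first by have := H p; rewrite pM => /andP[].
move=> pM; apply/eqP => e.
have := dvf.2 p (set0, tau0) tau0 pM sM; rewrite e !eqxx /= orbT => /(_ isT isT) ep.
by move: ne; rewrite -{1}e ep eqxx.
Qed.

Lemma sigma0_notup x : (x, sigma0) \notin V.
Proof. by apply/negP => /sigma0_free /andP[_]; rewrite eqxx. Qed.

Lemma walkP : walk V sigma0 P && endstep V (lastb sigma0 P) tau0.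
Proof. by rewrite -(is_traj_walk _ _ shapeV uuV sz_sigma0 sigma0_notup). Qed.

Definition r := size P.
Definition Bb l := lastb sigma0 (take l P).
Definition A l := nth tau0 [seq p.1 | p <- P] l.
Definition p0 : vpair N := (set0, set0).

Lemma nthPe l : (l < r)%N -> nth p0 P l = (A l, Bb l.+1).
Proof.
move=> lt; rewrite /A /Bb (nth_map p0) // (lastb_take_nth _ p0) //.
by rewrite -surjective_pairing.
Qed.

Lemma A_r : A r = tau0.
Proof. by rewrite /A nth_default // size_map. Qed.

Lemma Bb_r : Bb r = lastb sigma0 P.
Proof. by rewrite /Bb take_size. Qed.

Lemma Bb0 : Bb 0 = sigma0.
Proof. by rewrite /Bb take0. Qed.

Lemma step_P l : (l < r)%N -> step V (Bb l) (A l, Bb l.+1).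
Proof. move=> lt; rewrite -nthPe //; apply: walk_nth lt; by case/andP: walkP. Qed.

Lemma PV l : (l < r)%N -> (A l, Bb l.+1) \in V.
Proof. by move/step_P/and3P => []. Qed.

Lemma endstep_new l : (l <= r)%N -> endstep V (Bb l) (A l).
Proof.
rewrite leq_eqVlt => /orP[/eqP->|lt]; first by rewrite A_r Bb_r; case/andP: walkP.
by case/and3P: (step_P lt) => _ /= ? ?; apply/andP.
Qed.

Lemma sz_Bb l : (l <= r)%N -> #|Bb l| = k.+1.
Proof.
move=> _; rewrite /Bb (walk_size_lvl (M := V)) ?sz_sigma0 //; first exact: shapeV.
case/andP: walkP => w _; move: w; rewrite -{1}(cat_take_drop l P) walk_cat; by case/andP.
Qed.

Lemma sz_A l : (l <= r)%N -> #|A l| = k.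
Proof.
move=> le; case/andP: (endstep_new le) => /inc_neq0 [_]; rewrite sz_Bb //; lia.
Qed.

Lemma Bb_inj i j : (i <= r)%N -> (j <= r)%N -> Bb i = Bb j -> i = j.
Proof.
wlog ltij : i j / (i < j)%N.
  move=> H ir jr e; case: (ltngtP i j) => [ij|ji|//]; first exact: H.
  by apply/esym/H.
move=> ir jr e; exfalso.
set s' := take (j - i) (drop i P).
have w : walk V (Bb i) s'.
  case/andP: walkP => w _; move: w; rewrite -{1}(cat_take_drop i P) walk_cat => /andP[_].
  by rewrite -{1}(cat_take_drop (j - i) (drop i P)) walk_cat => /andP[].
have ls : lastb (Bb i) s' = Bb j.
  by rewrite /Bb -lastb_cat /s' -takeD; congr lastb; congr take; lia.
have ne : s' != [::].
  rewrite -size_eq0 /s' size_take size_drop; rewrite /r in ir jr; move: ir jr; set m := size P; move=> ir jr; by case: ltnP => h'; rewrite -lt0n; lia.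
by move: (acV ne w); rewrite ls e eqxx.
Qed.

Lemma A_inj i j : (i <= r)%N -> (j <= r)%N -> A i = A j -> i = j.
Proof.
wlog ltij : i j / (i < j)%N.
  move=> H ir jr e; case: (ltngtP i j) => [ij|ji|//]; first exact: H.
  by apply/esym/H.
move=> ir jr e; exfalso.
have ir' : (i < r)%N by lia.
have [jr'|je] : (j < r)%N \/ j = r by lia.
  case: (luV (PV ir') (PV jr') e) => _ e'; have := @Bb_inj i.+1 j.+1 ir' jr' e'; lia.
by move: (tau0_notlow (PV ir')); rewrite /= e je A_r eqxx.
Qed.



Definition W := cancelW V sigma0 P tau0.
Definition as_ := [seq p.1 | p <- P] ++ [:: tau0].
Definition bs := sigma0 :: [seq p.2 | p <- P].

Lemma as_nth l : (l <= r)%N -> nth tau0 as_ l = A l.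
Proof.
move=> le; rewrite /as_ nth_cat size_map; case: ltnP => h; first by [].
have -> : l = r by rewrite /r in le *; lia.
by rewrite subnn A_r.
Qed.

Lemma bs_nth l : (l <= r)%N -> nth sigma0 bs l = Bb l.
Proof.
case: l => [|l] le; first by rewrite Bb0.
have lt : (l < size P)%N by move: le; rewrite /r; lia.
rewrite /bs /= (nth_map p0) //.
by rewrite nthPe.
Qed.

Lemma size_as : size as_ = r.+1.
Proof. by rewrite /as_ size_cat size_map addn1. Qed.
Lemma size_bs : size bs = r.+1.
Proof. by rewrite /bs /= size_map. Qed.

Lemma zipP p : reflect (exists2 l, (l <= r)%N & p = (A l, Bb l)) (p \in zip as_ bs).
Proof.
apply: (iffP (nthP (tau0, sigma0))).
  move=> [l]; rewrite size_zip size_as size_bs minnn ltnS => le <-.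
  by exists l => //; rewrite nth_zip ?size_as ?size_bs // as_nth // bs_nth.
move=> [l le ->]; exists l; first by rewrite size_zip size_as size_bs minnn.
by rewrite nth_zip ?size_as ?size_bs // as_nth // bs_nth.
Qed.

Lemma PmemP p : reflect (exists2 l, (l < r)%N & p = (A l, Bb l.+1)) (p \in P).
Proof.
apply: (iffP (nthP p0)).
  by move=> [l lt <-]; exists l => //; rewrite nthPe.
by move=> [l lt ->]; exists l => //; rewrite nthPe.
Qed.

Lemma inW p : (p \in W) = ((p \in V) && (p \notin P)) || (p \in zip as_ bs).
Proof. by rewrite /W /cancelW !inE andbC. Qed.

Lemma new_in_W l : (l <= r)%N -> (A l, Bb l) \in W.
Proof. by move=> le; rewrite inW; apply/orP; right; apply/zipP; exists l. Qed.

Lemma old_up p : p \in V -> p \notin P -> forall l, (l <= r)%N -> p.2 != Bb l.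
Proof.
move=> pV pP [|l] le; first by rewrite Bb0; case/andP: (sigma0_free pV).
apply/eqP => e; have := uuV pV (PV le) e => ep.
by move: pP; rewrite ep; case/negP; apply/PmemP; exists l.
Qed.

Lemma old_low p : p \in V -> p \notin P -> forall l, (l <= r)%N -> p.1 != A l.
Proof.
move=> pV pP l le; apply/eqP => e.
have [lt|le'] := ltnP l r.
  have := luV pV (PV lt) e => ep.
  by move: pP; rewrite ep; case/negP; apply/PmemP; exists l.
have lr : l = r by lia.
by move: (tau0_notlow pV); rewrite e lr A_r eqxx.
Qed.

Lemma PinV p : p \in P -> p \in V.
Proof. by case/PmemP => l lt ->; apply: PV. Qed.

Lemma shapeW : shapeM W.
Proof.
move=> p; rewrite inW => /orP[/andP[pV _]|/zipP [l le ->]]; first exact: shapeV.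
by case/andP: (endstep_new le) => /inc_neq0 [pr e] _.
Qed.

Lemma uuW : uuM W.
Proof.
move=> p q; rewrite !inW => /orP[/andP[pV pP]|/zipP [l le ->]] /orP[/andP[qV qP]|/zipP [l' le' ->]] /= e.
- exact: uuV.
- by move: (old_up pV pP le'); rewrite e eqxx.
- by move: (old_up qV qP le); rewrite e eqxx.
- by have := Bb_inj le le' e => ->.
Qed.

Lemma luW : luM W.
Proof.
move=> p q; rewrite !inW => /orP[/andP[pV pP]|/zipP [l le ->]] /orP[/andP[qV qP]|/zipP [l' le' ->]] /= e.
- exact: luV.
- by move: (old_low pV pP le'); rewrite e eqxx.
- by move: (old_low qV qP le); rewrite e eqxx.
- by have := A_inj le le' e => ->.
Qed.

Lemma Wpartner l x : (l <= r)%N -> ((x, Bb l) \in W) = (x == A l).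
Proof.
move=> le; apply/idP/eqP => [xW|->]; last exact: new_in_W.
by have := uuW xW (new_in_W le) erefl => -[].
Qed.

Lemma Vpartner l x : (0 < l <= r)%N -> ((x, Bb l) \in V) = (x == A l.-1).
Proof.
move=> /andP[l0 le]; have lt : (l.-1 < r)%N by lia.
have := PV lt; rewrite prednK // => pv.
apply/idP/eqP => [xV|->//]; by have := uuV xV pv erefl => -[].
Qed.

Lemma notbs_partner b x : b \notin bs -> ((x, b) \in W) = ((x, b) \in V).
Proof.
move=> nb; rewrite inW; apply/idP/idP.
  case/orP => [/andP[]//|/zipP [l le [_ e]]].
  by move: nb; rewrite e -bs_nth // mem_nth // size_bs.
move=> xV; rewrite xV /=; apply/orP; left; apply/PmemP => -[l lt [_ e]].
by move: nb; rewrite e -bs_nth // mem_nth // size_bs.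
Qed.

Lemma index_Bb l : (l <= r)%N -> index (Bb l) bs = l.
Proof.
move=> le; have mem : Bb l \in bs by rewrite -bs_nth // mem_nth // size_bs.
have lt : (index (Bb l) bs <= r)%N by rewrite -ltnS -size_bs index_mem.
apply: Bb_inj => //; by rewrite -bs_nth // nth_index.
Qed.

Lemma inbs b : b \in bs -> (index b bs <= r)%N /\ Bb (index b bs) = b.
Proof.
move=> mem; have lt : (index b bs <= r)%N by rewrite -ltnS -size_bs index_mem.
by split=> //; rewrite -bs_nth // nth_index.
Qed.


Lemma walk_take l : walk V sigma0 (take l P).
Proof. case/andP: walkP => w _; move: w; rewrite -{1}(cat_take_drop l P) walk_cat; by case/andP. Qed.

Lemma walk_drop l : walk V (Bb l) (drop l P).
Proof. case/andP: walkP => w _; move: w; rewrite -{1}(cat_take_drop l P) walk_cat; by case/andP. Qed.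

Lemma lastb_drop l : lastb (Bb l) (drop l P) = Bb r.
Proof. by rewrite /Bb -lastb_cat cat_take_drop take_size. Qed.

Lemma suffix_ok l c : (l <= r)%N -> endstep V c (A l) ->
  walk V c (drop l P) && endstep V (lastb c (drop l P)) tau0.
Proof.
move=> le es; have [lt|ge] := ltnP l r; last first.
  have lr : l = r by lia.
  by move: es; rewrite lr A_r drop_oversize.
rewrite (drop_nth p0 lt) nthPe //= /step PV //=.
case/andP: es => -> -> /=.
have w := walk_drop l.+1; rewrite w /=.
case/andP: walkP => _; rewrite -Bb_r.
by rewrite /lastb /= -/(lastb (Bb l.+1) (drop l.+1 P)) lastb_drop.
Qed.

Lemma splice m seg l : (m <= r)%N -> (l <= r)%N -> walk V (Bb m) seg ->
  endstep V (lastb (Bb m) seg) (A l) -> take m P ++ seg ++ drop l P = P.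
Proof.
move=> mr lr w es; apply: un.
rewrite (is_traj_walk _ _ shapeV uuV sz_sigma0 sigma0_notup).
rewrite !walk_cat walk_take -/(Bb m) w /= !lastb_cat -/(Bb m).
exact: suffix_ok.
Qed.

Lemma contra_old m p s l : (m <= r)%N -> (l <= r)%N -> p \notin P ->
  walk V (Bb m) (p :: s) -> endstep V (lastb (Bb m) (p :: s)) (A l) -> False.
Proof.
move=> mr lr pP w es; have := splice mr lr w es => e.
by move: pP; rewrite -e !mem_cat inE eqxx orbT.
Qed.

Lemma contra_new m l : (m <= r)%N -> (l <= r)%N -> l != m -> endstep V (Bb m) (A l) -> False.
Proof.
move=> mr lr ne es; have := splice mr lr (erefl : walk V (Bb m) [::]) es => e.
have := congr1 size e; rewrite /= size_cat size_take size_drop.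
rewrite /r in mr lr ne *; case: ltnP => h; move/eqP: ne; lia.
Qed.

Definition reachesP b :=
  pb (exists s l, [/\ walk V b s, (l <= r)%N & endstep V (lastb b s) (A l)]).
Definition Hb := ((#|V| + r).+1)%N.
Definition hW b := (if b \in bs then Hb + index b bs
  else if reachesP b then Hb + Hb + hpot V b else hpot V b)%N.

Lemma hW_step b p : step W b p -> (hW p.2 < hW b)%N.
Proof.
move=> st; have hV := hpot_le V; rewrite /hW.
case/and3P: (st); rewrite inW => /orP[/andP[pV pP]|/zipP[l le ep]] inz nW.
-
  have p2bs : p.2 \notin bs.
    apply/negP => /inbs [le e]; by move: (old_up pV pP le); rewrite e eqxx.
  rewrite (negbTE p2bs).
  case: (boolP (b \in bs)) => [bbs|nbs].
    have [mr eb] := inbs bbs; set m := index b bs in mr eb *.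
    have stV : step V b p.
      rewrite /step pV inz /=; apply/negP => pbV.
      case: (posnP m) => [m0|m0].
        by move: pbV; rewrite -eb m0 Bb0 (negbTE (sigma0_notup _)).
      move: pbV; rewrite -eb Vpartner ?m0 // => /eqP e1.
      have le1 : (m.-1 <= r)%N by lia.
      by move: (old_low pV pP le1); rewrite e1 eqxx.
    case: (boolP (reachesP p.2)) => [/pbP [s [l [w lr es]]]|nrp].
      exfalso; apply: (contra_old mr lr pP (s := s)); first by rewrite /= eb stV.
      by [].
    by apply: leq_trans (leq_addr m Hb); rewrite /Hb ltnS (leq_trans (hV p.2)) // leq_addr.
  have stV : step V b p by rewrite /step pV inz /= -notbs_partner ?nbs.
  have lt := hpot_step acV stV.
  case: (boolP (reachesP p.2)) => [rp|nrp]; case: (boolP (reachesP b)) => [rb|nrb].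
  - by rewrite ltn_add2l.
  - move: rp => /pbP [s [l [w lr es]]]; case/negP: nrb; apply/pbP.
    by exists (p :: s), l; split=> //=; rewrite stV.
  - by rewrite (leq_trans lt) // leq_addl.
  - by [].
-
  rewrite ep /= in inz nW; rewrite ep.
  have bsl : Bb l \in bs by rewrite -bs_nth // mem_nth // size_bs.
  rewrite bsl index_Bb //.
  case: (boolP (b \in bs)) => [bbs|nbs].
    have [mr eb] := inbs bbs; set m := index b bs in mr eb *.
    have lm : l != m by apply/eqP => lm; move: nW; rewrite -eb -lm Wpartner // eqxx.
    case: (eqVneq l m.-1) => [lm1|lm1].
      have m0 : (0 < m)%N by move: lm; rewrite lm1; case: (m) => //=; rewrite eqxx.
      by rewrite lm1 ltn_add2l ltn_predL.
    exfalso; apply: (contra_new mr le lm); rewrite eb /endstep inz /=.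
    case: (posnP m) => [m0|m0].
      by rewrite -eb m0 Bb0 sigma0_notup.
    rewrite -eb Vpartner ?m0 //; apply/negP => /eqP e.
    by move: lm1; rewrite (A_inj le _ e) ?eqxx // (leq_trans (leq_pred m) mr).
  case: (boolP (reachesP b)) => [rb|/negP nrb].
    rewrite /Hb -addnA ltn_add2l; apply: leq_trans (leq_addr _ _).
    by rewrite ltnS (leq_trans le) // leq_addl.
  exfalso; apply: nrb; apply/pbP; exists [::], l; split=> //.
  by rewrite /endstep /lastb /= inz /= -notbs_partner ?nbs.
Qed.

Lemma acW : acyclic W.
Proof.
suff H : forall s b, s != [::] -> walk W b s -> (hW (lastb b s) < hW b)%N.
  by move=> b s ne w; apply/eqP => e; have := H s b ne w; rewrite e ltnn.
elim=> // p s IH b _ /= /andP[st w].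
have lt := hW_step st.
case: s IH w => [|p' s] IH w; first by rewrite /lastb /=.
rewrite /lastb /= -/(lastb p.2 (p' :: s)).
by apply: ltn_trans lt; apply: IH.
Qed.


Lemma diffW p : (p \in W) != (p \in V) -> #|p.1| = k /\ #|p.2| = k.+1.
Proof.
move=> ne; case: (boolP (p \in P)) => [/PmemP [l lt ->]|pP].
  by rewrite sz_A ?sz_Bb //; lia.
have : p \in zip as_ bs.
  by move: ne; rewrite inW pP andbT; case: (p \in V); case: (p \in zip as_ bs).
by case/zipP => l le ->; rewrite sz_A ?sz_Bb.
Qed.

Lemma memWV p : (#|p.1| != k) || (#|p.2| != k.+1) -> (p \in W) = (p \in V).
Proof.
move=> h; apply/eqP; apply/negP => /negP ne; have [e1 e2] := diffW ne.
by move: h; rewrite e1 e2 !eqxx.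
Qed.

Lemma critP M (q : nat) (s : simplex N) : reflect ([/\ s \in D, #|s| = q, s != set0 &
    (forall p, p \in M -> (p.1 != s) && (p.2 != s)) \/ (set0, s) \in M]) (crit D M q s).
Proof.
apply: (iffP and4P) => [[sD /eqP sq ne H]|[sD sq ne H]]; split=> //; try by apply/eqP.
  case/orP: H => [/forallP H|]; [left=> p pM; by have := H p; rewrite pM | by right].
case: H => [H|H]; apply/orP; [left; apply/forallP => p; apply/implyP; exact: H | by right].
Qed.

Lemma crit_big M (q : nat) (s : simplex N) : shapeM M -> (2 <= #|s|)%N ->
  crit D M q s = [&& s \in D, #|s| == q, s != set0 & [forall p in M, (p.1 != s) && (p.2 != s)]].
Proof.
move=> sh s2; rewrite /crit; congr [&& _, _, _ & _].
case: (boolP ((set0, s) \in M)) => [sM|]; last by rewrite orbF.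
by have [_ /= e] := sh _ sM; move: s2; rewrite e cards0.
Qed.

Lemma crit_other (q : nat) (s : simplex N) : q != k -> q != k.+1 -> crit D W q s = crit D V q s.
Proof.
move=> qk qk1; apply/critP/critP => -[sD sq ne H]; split=> //.
- case: H => [H|H]; [left => p pV | right].
    case: (boolP (p \in W)) => [pW|pW]; first exact: H.
    apply/andP; split; apply/negP => /eqP e.
      have := diffW (p := p); rewrite pV (negbTE pW) => /(_ isT) [e1 _]; move: qk; by rewrite -sq -e e1 eqxx.
    have := diffW (p := p); rewrite pV (negbTE pW) => /(_ isT) [_ e2]; move: qk1; by rewrite -sq -e e2 eqxx.
  by rewrite -(memWV (p := (set0, s))) //= cards0 eq_sym -lt0n k0.
- case: H => [H|H]; [left => p pW | right].
    case: (boolP (p \in V)) => [pV|pV]; first exact: H.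
    apply/andP; split; apply/negP => /eqP e.
      have := diffW (p := p); rewrite pW (negbTE pV) => /(_ isT) [e1 _]; move: qk; by rewrite -sq -e e1 eqxx.
    have := diffW (p := p); rewrite pW (negbTE pV) => /(_ isT) [_ e2]; move: qk1; by rewrite -sq -e e2 eqxx.
  by rewrite (memWV (p := (set0, s))) //= cards0 eq_sym -lt0n k0.
Qed.

Lemma A_low l : (l < r)%N -> A l \in lowers V.
Proof. by move=> lt; apply/imsetP; exists (A l, Bb l.+1) => //; apply: PV. Qed.

Lemma crit_k1 (s : simplex N) : crit D W k.+1 s = crit D V k.+1 s && (s != sigma0).
Proof.
case: (boolP (#|s| == k.+1)%N) => [/eqP sz|]; last first.
  by move=> ns; rewrite /crit (negbTE ns) !andbF.
have s2 : (2 <= #|s|)%N by rewrite sz ltnS k0.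
rewrite (crit_big _ shapeW s2) (crit_big _ shapeV s2) -!andbA; congr [&& _, _, _ & _].
apply/idP/andP => [/forall_inP H|[/forall_inP H ns]].
  split.
    apply/forall_inP => p pV; case: (boolP (p \in P)) => [/PmemP [l lt ep]|pP].
      apply/andP; split; first by rewrite ep /=; apply/eqP => e; move: (sz_A (ltnW lt)); rewrite e sz; lia.
      rewrite ep /=; apply/eqP => e.
      by have := H _ (new_in_W lt); rewrite e eqxx andbF.
    by apply: H; rewrite inW pV pP.
  by apply/eqP => e; have := H _ (new_in_W (leq0n r)); rewrite Bb0 e eqxx andbF.
apply/forall_inP => p; rewrite inW => /orP[/andP[pV _]|/zipP [l le ->]]; first exact: H.
apply/andP; split => /=; apply/eqP => e.
  by move: (sz_A le); rewrite e sz; lia.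
case: (posnP l) => [l0|l0]; first by move: ns; rewrite -e l0 Bb0 eqxx.
have lt : (l.-1 < r)%N by lia.
by have := H _ (PV lt); rewrite prednK // e eqxx andbF.
Qed.

Lemma crit_k_tau t : crit D V k t -> t != tau0 -> crit D W k t.
Proof.
move=> /critP [tD tk ne H] nt; apply/critP; split=> //.
case: H => [H|H]; last by right; rewrite (memWV (p := (set0, t))) //= cards0 eq_sym -lt0n k0.
left => p; rewrite inW => /orP[/andP[pV _]|/zipP [l le ->]]; first exact: H.
apply/andP; split => /=; apply/eqP => e.
  have [lt|ge] := ltnP l r.
    by have := H _ (PV lt); rewrite /= e eqxx.
  by move: nt; rewrite -e (_ : l = r) ?A_r ?eqxx //; lia.
by move: (sz_Bb le); rewrite e tk; lia.
Qed.

Lemma crit_k t : (2 <= k)%N -> crit D W k t = crit D V k t && (t != tau0).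
Proof.
move=> k2; case: (boolP (t == tau0)) => [/eqP ->|nt].
  rewrite andbF; apply/negbTE/negP => /critP [_ _ _ [H|H]].
    by have := H _ (new_in_W (leqnn r)); rewrite A_r eqxx.
  by have [_ /= e] := shapeW H; move: k2; rewrite -sz_tau0 e cards0.
rewrite andbT; apply/idP/idP => [|/crit_k_tau]; last by apply.
move=> /critP [tD tk ne H]; apply/critP; split=> //; left.
have {}H : forall p, p \in W -> (p.1 != t) && (p.2 != t).
  case: H => // H; by have [_ /= e] := shapeW H; move: k2; rewrite -tk e cards0.
move=> p pV; case: (boolP (p \in P)) => [/PmemP [l lt ep]|pP]; last by apply: H; rewrite inW pV pP.
rewrite ep /=; apply/andP; split.
  by have := H _ (new_in_W (ltnW lt)); case/andP.
by apply/eqP => e; move: (sz_Bb lt); rewrite e tk; lia.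


Qed.


Lemma vpath_eq n b pa u : n != k.+1 -> vpath V n b pa u = vpath W n b pa u.
Proof.
move=> nk; elim: u b pa => //= -[a b'] u IH b pa; rewrite IH.
case e: (#|b'| == n)%N; rewrite ?andbF //.
by rewrite (memWV (p := (a, b'))) //= (eqP e) nk orbT.
Qed.

Lemma traj_eq n (s : simplex N) u t : n != k.+1 -> is_traj V n s u t = is_traj W n s u t.
Proof. by move=> nk; rewrite /is_traj vpath_eq. Qed.

Lemma hpotV_W (s : simplex N) n : #|s| = n -> n != k.+1 -> (hpot V s <= #|W|)%N.
Proof.
move=> sn nk; apply: leq_trans (leq_imset_card (fun p : vpair N => p.2) W).
apply: subset_leq_card; apply/subsetP => c; rewrite inE => /pbP [u [ne w <-]].
have := lastb_upper ne w => /imsetP [p pV ep].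
have lv := walk_size_lvl shapeV w.
apply/imsetP; exists p => //; rewrite (memWV (p := p)) //.
by rewrite -ep lv sn nk orbT.
Qed.

Lemma sum_trunc (f : nat -> int) h K : (h <= K)%N -> (forall r, (h < r)%N -> f r = 0) ->
  \sum_(r < K.+1) f r = \sum_(r < h.+1) f r.
Proof.
move=> hK f0; rewrite -(big_mkord xpredT f) -(big_mkord xpredT f).
rewrite (big_cat_nat _ (n := h.+1)) //=.
rewrite [X in _ + X]big_nat_cond [X in _ + X]big1 ?addr0 // => i /andP[/andP[hi _] _].
by apply: f0.
Qed.

Lemma mcoef_eq n (s : simplex N) t : n != k.+1 -> #|s| = n -> (forall x, (x, s) \notin V) ->
  mcoef W n s t = mcoef V n s t.
Proof.
move=> nk sn ns; rewrite /mcoef.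
set f := fun r : nat => \sum_(u : r.-tuple (vpair N) | is_traj V n s u t) traj_weight s u t.
have eW : \sum_(r < (#|W|).+1) \sum_(u : (nat_of_ord r).-tuple (vpair N) | is_traj W n s u t)
   traj_weight s u t = \sum_(r < (#|W|).+1) f r.
  by apply: eq_bigr => r _; apply: eq_bigl => u; rewrite traj_eq.
rewrite eW -/(\sum_(r < (#|V|).+1) f r).
have f0 : forall r, (hpot V s < r)%N -> f r = 0.
  move=> r lt; rewrite /f big_pred0 // => u; apply/negbTE/negP.
  rewrite (is_traj_walk _ _ shapeV uuV sn ns) => /andP[w _].
  by have := walk_len acV w; rewrite size_tuple; lia.
rewrite (sum_trunc (hpotV_W sn nk) f0) (sum_trunc (hpot_le V s) f0) //.
Qed.


Lemma weight_sq M b u t : shapeM M -> walk M b u -> endstep M (lastb b u) t ->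
  traj_weight b u t * traj_weight b u t = 1.
Proof.
move=> sh; elim: u b => [|[a b'] u IH] b /=.
  by move=> _ /andP[nz _]; rewrite inc_sq.
move=> /andP[/and3P[abM nz _] w] es.
have nz' := shape_inc sh abM; rewrite /= in nz'.
have e := IH _ w es.
set x := incidence b a; set y := incidence b' a; set z := traj_weight b' u t.
have -> : - (x * y) * z * (- (x * y) * z) = (x * x) * (y * y) * (z * z) by ring.
by rewrite e (inc_sq nz) (inc_sq nz') !mul1r.
Qed.

Definition eps := mcoef V k.+1 sigma0 tau0.

Lemma eps_val : eps = traj_weight sigma0 P tau0.
Proof.
have sizeP : (size P < (#|V|).+1)%N.
  rewrite ltnS; apply: leq_trans (hpot_le V sigma0); apply: walk_len acV _.
  by case/andP: walkP.
have inner : forall r : nat, \sum_(u : r.-tuple (vpair N) | is_traj V k.+1 sigma0 u tau0)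
    traj_weight sigma0 u tau0 = if r == size P then traj_weight sigma0 P tau0 else 0.
  move=> r; case: eqP => [e|ne].
    have sz : size P == r by rewrite e.
    rewrite (big_pred1 (Tuple sz)) // => u; apply/idP/eqP => [/un ep|->//].
    by apply: val_inj; rewrite /= ep.
  rewrite big_pred0 // => u; apply/negbTE/negP => /un ep.
  by apply: ne; rewrite -ep size_tuple.
rewrite /eps /mcoef (eq_bigr (fun r : 'I_(#|V|).+1 => if nat_of_ord r == size P then traj_weight sigma0 P tau0 else 0)); last by move=> r _; exact: inner.
rewrite (bigD1 (Ordinal sizeP)) //= eqxx big1 ?addr0 // => i ne.
case: eqP => // e; case/eqP: ne; exact: val_inj.
Qed.

Lemma eps_sq : eps * eps = 1.
Proof.
rewrite eps_val; case/andP: walkP => w es; exact: weight_sq shapeV w es.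
Qed.

Lemma critV_notlow (q : nat) t : crit D V q t -> forall p, p \in V -> p.1 != t.
Proof.
case/critP => _ _ ne [H p pM|sM p pM]; first by case/andP: (H p pM).
apply/eqP => e.
have := dvf.2 p (set0, t) t pM sM; rewrite e !eqxx /= orbT => /(_ isT isT) ep.
by move: ne; rewrite -{1}e ep eqxx.
Qed.

Lemma psi_nolow M t x : x \notin lowers M -> psi M t x = if x == t then 1 else 0.
Proof.
move=> nl; rewrite /psi big_pred0 ?addr0 // => p; apply/negbTE/negP => /andP[pM /eqP e].
by case/negP: nl; apply/imsetP; exists p.
Qed.

Lemma lowV_W x : x \in lowers V -> x \in lowers W.
Proof.
case/imsetP => p pV ->; case: (boolP (p \in P)) => [/PmemP [l lt ->]|pP].
  by apply/imsetP; exists (A l, Bb l) => //; exact: new_in_W (ltnW lt).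
by apply/imsetP; exists p => //; rewrite inW pV pP.
Qed.

Lemma tau0_lowW : tau0 \in lowers W.
Proof. by apply/imsetP; exists (A r, Bb r); [exact: new_in_W | rewrite A_r]. Qed.

Lemma critV_notlowW t : crit D V k t -> t != tau0 -> t \notin lowers W.
Proof.
move=> ct' nt; apply/negP => /imsetP [p]; rewrite inW => /orP[/andP[pV _]|/zipP [l le ->]] e.
  by move: (critV_notlow ct' pV); rewrite e eqxx.
have [lt|ge] := ltnP l r.
  by move: (critV_notlow ct' (PV lt)); rewrite /= e eqxx.
by move: nt; rewrite e /= (_ : l = r) ?A_r ?eqxx //; lia.
Qed.

Definition Ssum M t b := \sum_x incidence b x * psi M t x.

Lemma S_sigma0 t : Ssum V t sigma0 = mcoef V k.+1 sigma0 t.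
Proof.
by rewrite (mcoef_Zs _ shapeV uuV sz_sigma0 sigma0_notup) (Zs_crit _ acV sigma0_notup).
Qed.

Lemma Wupper p : p \in W -> (exists2 q, q \in V & q.2 = p.2) \/ p.2 = sigma0.
Proof.
rewrite inW => /orP[/andP[pV _]|/zipP [l le ->]]; first by left; exists p.
case: (posnP l) => [->|l0]; first by right; rewrite Bb0.
left; exists (A l.-1, Bb l.-1.+1); first by apply: PV; lia.
by rewrite prednK.
Qed.

Lemma main_formula tau (s : simplex N) : crit D V k tau -> tau != tau0 -> crit D W k.+1 s ->
  mcoef W k.+1 s tau =
  mcoef V k.+1 s tau - eps * mcoef V k.+1 sigma0 tau * mcoef V k.+1 s tau0.
Proof.
move=> ctau nt csW.
have csV : crit D V k.+1 s by move: csW; rewrite crit_k1 => /andP[].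
have sz : #|s| = k.+1 by case/critP: csV.
have s2 : (2 <= #|s|)%N by rewrite sz ltnS k0.
have nsW : forall x, (x, s) \notin W.
  move: csW; rewrite (crit_big _ shapeW s2) => /and4P[_ _ _ /forall_inP H] x.
  by apply/negP => /H /andP[_]; rewrite eqxx.
have nsV : forall x, (x, s) \notin V.
  move: csV; rewrite (crit_big _ shapeV s2) => /and4P[_ _ _ /forall_inP H] x.
  by apply/negP => /H /andP[_]; rewrite eqxx.
set lam := eps * mcoef V k.+1 sigma0 tau.
pose phi x := psi W tau x - psi V tau x + lam * psi V tau0 x.
have tau_nlW := critV_notlowW ctau nt.
have tau_nlV : tau \notin lowers V by apply/negP => /lowV_W; apply/negP.
have SV0 : forall t q, t \notin lowers V -> q \in V -> Ssum V t q.2 = 0.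
  move=> t q nl qV; apply: (psi_upper acV shapeV uuV luV qV).
  by apply/negP => /eqP e; case/negP: nl; apply/imsetP; exists q; rewrite ?e.
have tau0_nlV : tau0 \notin lowers V.
  by apply/negP => /imsetP [q qV e]; move: (tau0_notlow qV); rewrite -e eqxx.
have phi0 : forall x, phi x = 0.
  apply: (phi_zero acW shapeW uuW).
    move=> x nl; have nlV : x \notin lowers V by apply/negP => /lowV_W; apply/negP.
    rewrite /phi !psi_nolow //.
    have -> : (x == tau0) = false.
      by apply/negbTE/negP => /eqP e; case/negP: nl; rewrite e tau0_lowW.
    by rewrite mulr0 addr0 subrr.
  move=> p pW.
  have -> : \sum_x incidence p.2 x * phi x = Ssum W tau p.2 - Ssum V tau p.2 + lam * Ssum V tau0 p.2.
    rewrite /Ssum big_distrr -sumrB -big_split /=; apply: eq_bigr => x _; rewrite /phi; ring.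
  have -> : Ssum W tau p.2 = 0.
    apply: (psi_upper acW shapeW uuW luW pW).
    by apply/negP => /eqP e; case/negP: tau_nlW; apply/imsetP; exists p; rewrite ?e.
  case: (Wupper pW) => [[q qV <-]|->].
    by rewrite (SV0 tau) // (SV0 tau0) // mulr0 subr0 addr0.
  rewrite !S_sigma0 -/eps /lam; set m := mcoef V _ sigma0 tau.
  have -> : eps * m * eps = eps * eps * m by ring.
  rewrite eps_sq mul1r; ring.
have ex : forall x, psi W tau x = psi V tau x - lam * psi V tau0 x.
  move=> x; have := phi0 x; rewrite /phi => /eqP; rewrite addrC addr_eq0 => /eqP ->.
  by ring.
rewrite (@mcoef_Zs _ W k.+1 s tau shapeW uuW sz nsW) (Zs_crit _ acW nsW).
rewrite !(mcoef_Zs _ shapeV uuV sz nsV) !(Zs_crit _ acV nsV).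
under eq_bigr do rewrite ex mulrBr mulrCA.
rewrite sumrB -big_distrr /=; ring.
Qed.


Lemma sum_basis (C : pred (simplex N)) (F : simplex N -> int) tau : C tau ->
  \sum_(t | C t) basis_chain tau t * F t = F tau.
Proof.
move=> Ct; rewrite (bigD1 tau) //= /basis_chain ffunE eqxx mul1r big1 ?addr0 //.
by move=> t /andP[_ nt]; rewrite ffunE (negbTE nt) mul0r.
Qed.

Lemma crit_notup M (q : nat) (s : simplex N) : shapeM M -> crit D M q s -> (2 <= q)%N ->
  forall x, (x, s) \notin M.
Proof.
move=> sh cr q2; have sz : #|s| = q by case/critP: cr.
have s2 : (2 <= #|s|)%N by rewrite sz.
move: cr; rewrite (crit_big _ sh s2) => /and4P[_ _ _ /forall_inP H] x.
by apply/negP => /H /andP[_]; rewrite eqxx.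
Qed.

Lemma crit_q1 M (q : nat) t : crit D M q t -> (1 <= q)%N.
Proof.
case/critP => _ <- ne _; rewrite lt0n; apply/negP => /eqP /cards0_eq e.
by move: ne; rewrite e eqxx.
Qed.

Lemma main_all :
  [/\ forall q : nat, (k.+1 < q)%N \/ (q.+1 < k)%N ->
        [/\ forall s : simplex N, crit D W q s = crit D V q s,
            forall s : simplex N, crit D W q.+1 s = crit D V q.+1 s &
            forall c : chain N, cobd D W q c = cobd D V q c],
      forall beta, crit D W k.-1 beta ->
        cobd D W k.-1 (basis_chain beta)
        = [ffun t : simplex N => if t == tau0 then 0 else cobd D V k.-1 (basis_chain beta) t],
      [/\ forall s : simplex N, crit D W k.+1 s -> crit D V k.+1 s,
          forall s : simplex N, crit D W k.+2 s = crit D V k.+2 s &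
          forall c : chain N, inC D W k.+1 c -> cobd D W k.+1 c = cobd D V k.+1 c] &
      forall tau, crit D V k tau -> tau != tau0 ->
        cobd D W k (basis_chain tau)
        = [ffun s : simplex N => if crit D V k.+1 s && (s != sigma0) then
              cobd D V k (basis_chain tau) s
              - cobd D V k (basis_chain tau0) sigma0
                * cobd D V k (basis_chain tau) sigma0
                * cobd D V k (basis_chain tau0) s
            else 0]].
Proof using cx cdim gr hk cs ct tr un.
split.
- move=> q hq.
  have q1 : q != k by apply/eqP => e; rewrite e in hq; lia.
  have q2 : q != k.+1 by apply/eqP => e; rewrite e in hq; lia.
  have q3 : q.+1 != k by apply/eqP => e; rewrite -e in hq; lia.
  have q4 : q.+1 != k.+1 by [].
  split; [by move=> s; apply: crit_other | by move=> s; apply: crit_other |].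
  move=> c; apply/ffunP => s; rewrite !ffunE (crit_other _ q3 q4).
  case: ifP => // csV; apply: eq_big => [t|t ctW]; first exact: crit_other.
  have ctV : crit D V q t by rewrite -crit_other.
  have sz : #|s| = q.+1 by case/critP: csV.
  rewrite mcoef_eq //; apply: (crit_notup shapeV csV).
  by have := crit_q1 ctV; lia.
- move=> beta cb.
  have k2 : (2 <= k)%N by have := crit_q1 cb; have := k0; lia.
  have km : k.-1 != k by lia.
  have km1 : k.-1 != k.+1 by lia.
  have cbV : crit D V k.-1 beta by rewrite -crit_other.
  apply/ffunP => t; rewrite !ffunE prednK ?k0 // (crit_k _ k2).
  case: (eqVneq t tau0) => [->|nt]; first by rewrite andbF.
  rewrite andbT; case: ifP => // ctV.
  rewrite (sum_basis _ cb) (sum_basis _ cbV).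
  have sz : #|t| = k by case/critP: ctV.
  rewrite mcoef_eq //; first by lia.
  exact: (crit_notup shapeV ctV).
- split.
  + by move=> s; rewrite crit_k1 => /andP[].
  + by move=> s; apply: crit_other; lia.
  + move=> c hc; apply/ffunP => s; rewrite !ffunE crit_other; try lia.
    case: ifP => // csV.
    have sz : #|s| = k.+2 by case/critP: csV.
    rewrite big_mkcond [RHS]big_mkcond /=; apply: eq_bigr => t _.
    case: (boolP (crit D W k.+1 t)) => [ctW|nctW].
      have ctV : crit D V k.+1 t by move: ctW; rewrite crit_k1 => /andP[].
      rewrite ctV mcoef_eq //; first by lia.
      exact: (crit_notup shapeV csV).
    have -> : c t = 0 by case: (eqVneq (c t) 0) => // /hc; rewrite (negbTE nctW).
    by rewrite mul0r; case: ifP.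
- move=> tau ctau nt; apply/ffunP => s; rewrite !ffunE -crit_k1.
  case: ifP => // csW.
  have csV : crit D V k.+1 s by move: csW; rewrite crit_k1 => /andP[].
  rewrite (sum_basis _ (crit_k_tau ctau nt)) csV cs.
  rewrite (sum_basis _ ctau) (sum_basis _ ct) (sum_basis _ ctau) (sum_basis _ ct).
  by rewrite main_formula.
Qed.

End Main.

Theorem theorem3p3 (N d k : nat) (D : {set {set 'I_N}})
    (V : {set {set 'I_N} * {set 'I_N}}) (sigma0 tau0 : {set 'I_N})
    (P : seq ({set 'I_N} * {set 'I_N})) :
  is_complex D -> complex_dim D d -> gradient D V ->
  (1 <= k <= d)%N ->
  crit D V k.+1 sigma0 -> crit D V k tau0 ->
  is_traj V k.+1 sigma0 P tau0 ->
  (forall P', is_traj V k.+1 sigma0 P' tau0 -> P' = P) ->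
  let W := cancelW V sigma0 P tau0 in
  [/\ (* (1) *)
      forall q : nat, (k.+1 < q)%N \/ (q.+1 < k)%N ->
        [/\ forall s, crit D W q s = crit D V q s,
            forall s, crit D W q.+1 s = crit D V q.+1 s &
            forall c, cobd D W q c = cobd D V q c],
      (* (2) *)
      forall beta, crit D W k.-1 beta ->
        cobd D W k.-1 (basis_chain beta)
        = [ffun t => if t == tau0 then 0 else cobd D V k.-1 (basis_chain beta) t],
      (* (3) *)
      [/\ forall s, crit D W k.+1 s -> crit D V k.+1 s,
          forall s, crit D W k.+2 s = crit D V k.+2 s &
          forall c, inC D W k.+1 c -> cobd D W k.+1 c = cobd D V k.+1 c] &
      (* (4) *)
      forall tau, crit D V k tau -> tau != tau0 ->
        cobd D W k (basis_chain tau)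
        = [ffun s => if crit D V k.+1 s && (s != sigma0) then
              cobd D V k (basis_chain tau) s
              - cobd D V k (basis_chain tau0) sigma0
                * cobd D V k (basis_chain tau) sigma0
                * cobd D V k (basis_chain tau0) s
            else 0]].
Proof.
move=> cx cdim gr hk cs ct tr un W.
exact: (main_all cx cdim gr hk cs ct tr un).
Qed.
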